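(* Let $q,N_x,N_T,m\ge 1$ be integers and let $\Phi,\Phi_c\in\mathbb{C}^{qN_x\times qN_x}$. Assume there is a unitary matrix $F\in\mathbb{C}^{qN_x\times qN_x}$ such that $F^{-1}\Phi F=\mathrm{diag}(\widetilde\Phi_1,\dots,\widetilde\Phi_{N_x})$ and $F^{-1}\Phi_c F=\mathrm{diag}(\widetilde\Phi_{c,1},\dots,\widetilde\Phi_{c,N_x})$ are block diagonal with blocks $\widetilde\Phi_n,\widetilde\Phi_{c,n}\in\mathbb{C}^{q\times q}$. Assume further that for every $n=1,\dots,N_x$ there is an invertible $U_n\in\mathbb{C}^{q\times q}$ with $U_n^{-1}\widetilde\Phi_nU_n=\mathrm{diag}(\lambda_{n,1},\dots,\lambda_{n,q})$ and $U_n^{-1}\widetilde\Phi_{c,n}U_n=\mathrm{diag}(\mu_{n,1},\dots,\mu_{n,q})$, and that $|\mu_{n,l}|\neq 1$ for all $n,l$. Then the coarse-grid iteration matrices $E_\Delta^F=I-A_c^{-1}A_S$ and $E_\Delta^{FCF}=(I-A_c^{-1}A_S)(I-A_S)$ satisfy $$\|E_\Delta^F\|_2\le \max_{1\le n\le N_x}\Big\{\kappa(U_n)\max_{1\le l\le q}\Big\{|\lambda_{n,l}^m-\mu_{n,l}|\,\frac{1-|\mu_{n,l}|^{N_T}}{1-|\mu_{n,l}|}\Big\}\Big\}$$ and $$\|E_\Delta^{FCF}\|_2\le \max_{1\le n\le N_x}\Big\{\kappa(U_n)\max_{1\le l\le q}\Big\{|\lambda_{n,l}^m-\mu_{n,l}|\,|\lambda_{n,l}|^m\,\frac{1-|\mu_{n,l}|^{N_T-1}}{1-|\mu_{n,l}|}\Big\}\Big\},$$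 where $\kappa(U_n)=\|U_n\|_2\|U_n^{-1}\|_2$.
   Context: For a square matrix $G$, write $\mathcal{B}_{N_T}(G)$ for the $(N_T+1)\times(N_T+1)$ block matrix (block rows/columns indexed $0,\dots,N_T$) with identity blocks on the diagonal, $-G$ on the first block subdiagonal, and zero elsewhere. The coarse-grid operator is $A_c=\mathcal{B}_{N_T}(\Phi_c)$ and the Schur-complement coarse-grid operator is $A_S=\mathcal{B}_{N_T}(\Phi^m)$; $I$ denotes the identity of the same size. $\|\cdot\|_2$ is the spectral norm. *)

(* Defs.v *)
From HB Require Import structures.
From mathcomp Require Import all_boot all_order all_algebra.
Set Implicit Arguments. Unset Strict Implicit. Unset Printing Implicit Defensive.
Import Order.TTheory GRing.Theory Num.Theory.
Local Open Scope ring_scope.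

(* Decomposition of a flat index k : 'I_(m*n) into (block, inner) = (k / n, k mod n),
   inverse of mxvec_index (row-major / lexicographic order). *)
Definition idx_pair (m n : nat) (k : 'I_(m * n)) : 'I_m * 'I_n :=
  enum_val (cast_ord (esym (@mxvec_cast m n)) k).

Definition blkdiag (C : pzRingType) (N q : nat) (B : 'I_N -> 'M[C]_q) : 'M[C]_(N * q) :=
  \matrix_(a, b)
    (let (i, r) := idx_pair a in let (j, s) := idx_pair b in
     if i == j then B i r s else 0).

Definition blkbidiag (C : pzRingType) (NT d : nat) (G : 'M[C]_d) : 'M[C]_(NT.+1 * d) :=
  \matrix_(a, b)
    (let (i, r) := idx_pair a in let (j, s) := idx_pair b in
     if i == j then (r == s)%:R
     else if (i : nat) == (j : nat).+1 then - G r s else 0).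

Definition adjmx (C : numClosedFieldType) (m n : nat) (A : 'M[C]_(m, n)) : 'M[C]_(n, m) :=
  (map_mx Num.conj A)^T.

Definition eigvals (C : numClosedFieldType) (n : nat) (A : 'M[C]_n) : seq C :=
  projT1 (closed_field_poly_normal (char_poly A)).

Definition opnorm2 (C : numClosedFieldType) (n : nat) (A : 'M[C]_n) : C :=
  sqrtC (\big[Num.max/0]_(z <- eigvals (adjmx A *m A)) `|z|).

Definition cond2 (C : numClosedFieldType) (n : nat) (U : 'M[C]_n) : C :=
  opnorm2 U * opnorm2 (invmx U).

(* Main.v *)
Require Import Defs.
From HB Require Import structures.
From mathcomp Require Import all_boot all_order all_algebra.
From mathcomp Require Import ring zify.
Import Order.TTheory GRing.Theory Num.Theory.
Set Implicit Arguments. Unset Strict Implicit. Unset Printing Implicit Defensive.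
Local Open Scope ring_scope.

Section P1.
Variable C : numClosedFieldType.

Lemma max_ge_l (x y : C) : 0 <= x -> 0 <= y -> x <= Num.max x y.
Proof.
move=> hx hy; rewrite /Num.max /Order.max; case: ifP => h //; exact: ltW.
Qed.

Lemma max_ge_r (x y : C) : 0 <= x -> 0 <= y -> y <= Num.max x y.
Proof.
move=> hx hy; rewrite /Num.max /Order.max; case: ifP => h //.
by rewrite real_leNgt ?h // ger0_real.
Qed.

Lemma max_le (x y b : C) : x <= b -> y <= b -> Num.max x y <= b.
Proof. by move=> hx hy; rewrite /Num.max /Order.max; case: ifP. Qed.

Lemma max_ge0 (x y : C) : 0 <= x -> 0 <= y -> 0 <= Num.max x y.
Proof. by move=> hx hy; rewrite /Num.max /Order.max; case: ifP. Qed.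

Lemma bigmaxC_ge0 (I : Type) (r : seq I) (F : I -> C) :
  (forall i, 0 <= F i) -> 0 <= \big[Num.max/0]_(i <- r) F i.
Proof.
move=> h; elim: r => [|a r IH]; first by rewrite big_nil.
by rewrite big_cons max_ge0.
Qed.

Lemma le_bigmaxC (I : eqType) (r : seq I) (F : I -> C) i :
  (forall i, 0 <= F i) -> i \in r -> F i <= \big[Num.max/0]_(j <- r) F j.
Proof.
move=> h; elim: r => [|a r IH] //; rewrite in_cons big_cons => /orP[/eqP->|ir].
  by apply: max_ge_l => //; apply: bigmaxC_ge0.
apply: le_trans (IH ir) _; apply: max_ge_r => //; exact: bigmaxC_ge0.
Qed.

Lemma le_bigmaxC_ord n (F : 'I_n -> C) i :
  (forall i, 0 <= F i) -> F i <= \big[Num.max/0]_(j < n) F j.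
Proof. by move=> h; apply: le_bigmaxC => //; rewrite mem_index_enum. Qed.

Lemma bigmax_leC (I : Type) (r : seq I) (F : I -> C) b :
  0 <= b -> (forall i, F i <= b) -> \big[Num.max/0]_(i <- r) F i <= b.
Proof.
move=> hb h; elim: r => [|a r IH]; first by rewrite big_nil.
by rewrite big_cons max_le.
Qed.

Definition nrm2 k (x : 'cV[C]_k) : C := \sum_i `|x i 0| ^+ 2.

Lemma nrm2_ge0 k (x : 'cV[C]_k) : 0 <= nrm2 x.
Proof. by apply: sumr_ge0 => i _; rewrite exprn_ge0. Qed.

Lemma adjmx_mul m n p (A : 'M[C]_(m, n)) (B : 'M[C]_(n, p)) :
  adjmx (A *m B) = adjmx B *m adjmx A.
Proof. by rewrite /adjmx map_mxM trmx_mul. Qed.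

Lemma adjmxK m n (A : 'M[C]_(m, n)) : adjmx (adjmx A) = A.
Proof. by apply/matrixP => i j; rewrite !mxE conjCK. Qed.

Lemma nrm2_adj k (x : 'cV[C]_k) : (adjmx x *m x) 0 0 = nrm2 x.
Proof. by rewrite !mxE; apply: eq_bigr => i _; rewrite !mxE normCK mulrC. Qed.

Lemma nrm2_unitary k (F : 'M[C]_k) (x : 'cV[C]_k) :
  adjmx F *m F = 1%:M -> nrm2 (F *m x) = nrm2 x.
Proof.
move=> hF; rewrite -!nrm2_adj adjmx_mul -mulmxA (mulmxA (adjmx F)) hF.
by rewrite mul1mx.
Qed.

Lemma nrm2_eq0 k (x : 'cV[C]_k) : (nrm2 x == 0) = (x == 0).
Proof.
rewrite /nrm2 psumr_eq0; last by move=> i _; rewrite exprn_ge0.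
apply/idP/idP => [/allP h|/eqP->]; last first.
  by apply/allP => i _ /=; rewrite mxE normr0 expr0n.
apply/eqP/matrixP => i j; rewrite ord1 mxE.
by have /= := h i (mem_index_enum _); rewrite sqrf_eq0 normr_eq0 => /eqP.
Qed.

End P1.

Section P2.
Variable C : numClosedFieldType.

Lemma eigvals_eigen n (A : 'M[C]_n) z : z \in eigvals A = eigenvalue A z.
Proof.
rewrite /eigvals eigenvalue_root_char; case: closed_field_poly_normal => s /= hs.
by rewrite [in RHS]hs (monicP (char_poly_monic A)) scale1r root_prod_XsubC.
Qed.

Lemma bigmax_leC_in (I : eqType) (r : seq I) (F : I -> C) b :
  0 <= b -> (forall i, i \in r -> F i <= b) -> \big[Num.max/0]_(i <- r) F i <= b.
Proof.
move=> hb; elim: r => [|a r IH] h; first by rewrite big_nil.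
rewrite big_cons max_le ?h ?mem_head //; apply: IH => i ir.
by apply: h; rewrite in_cons ir orbT.
Qed.

Lemma adjmx_tC m n (A : 'M[C]_(m, n)) : adjmx A = (A ^t*)%sesqui.
Proof. by rewrite /adjmx map_trmx. Qed.

Lemma opnorm2_le n (A : 'M[C]_n) c : 0 <= c ->
  (forall x, nrm2 (A *m x) <= c ^+ 2 * nrm2 x) -> opnorm2 A <= c.
Proof.
move=> hc h; rewrite /opnorm2 -(sqrCK hc).
have hM : \big[Num.max/0]_(z <- eigvals (adjmx A *m A)) `|z| <= c ^+ 2.
  apply: bigmax_leC_in; first by rewrite exprn_ge0.
  move=> z; rewrite eigvals_eigen => /eigenvalueP [v hv vn0].
  set x := adjmx v.
  have e1 : nrm2 (A *m x) = z * nrm2 x.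
    rewrite -!nrm2_adj adjmx_mul /x adjmxK !mulmxA -(mulmxA v) hv.
    by rewrite -scalemxAl mxE.
  have xp : 0 < nrm2 x.
    rewrite lt_def nrm2_ge0 nrm2_eq0 andbT; apply: contra vn0 => /eqP hx.
    by rewrite -(adjmxK v) -/x hx; apply/eqP/matrixP => i j; rewrite !mxE conjC0.
  have := h x; rewrite e1 ler_pM2r // => hz.
  have z0 : 0 <= z by rewrite -(pmulr_lge0 _ xp) -e1 nrm2_ge0.
  by rewrite ger0_norm.
rewrite ler_sqrtC // qualifE /= ?exprn_ge0 //.
by apply: bigmaxC_ge0.
Qed.

End P2.

Section P2b.
Variable C : numClosedFieldType.

Lemma opnorm2_ge n (A : 'M[C]_n) x :
  nrm2 (A *m x) <= opnorm2 A ^+ 2 * nrm2 x.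
Proof.
rewrite /opnorm2 sqrtCK.
set H := adjmx A *m A.
have hH : H \is normalmx.
  by apply/normalmxP; rewrite -!adjmx_tC /H adjmx_mul adjmxK.
move/orthomx_spectralP: hH.
set P := spectralmx H; set d := spectral_diag H => hE.
have Pu : P \is unitarymx by apply: spectral_unitarymx.
have Punit : P \in unitmx by apply: unitarymx_unit.
have iP : invmx P = adjmx P by rewrite invmx_unitary // adjmx_tC.
have aPP : adjmx P *m P = 1%:M by rewrite -iP mulVmx.
set M := \big[Num.max/0]_(z <- eigvals H) `|z|.
have dM : forall i, `|d 0 i| <= M.
  move=> i; rewrite /M; apply: (le_bigmaxC (F := fun z : C => `|z|)) => //; rewrite eigvals_eigen.
  apply/eigenvalueP; exists (delta_mx 0 i *m P).
    rewrite [in LHS]hE !mulmxA mulmxK // scalemxAl; congr (_ *m _).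
    apply/matrixP => a b; rewrite mul_mx_diag !mxE ord1.
    by case: (eqVneq b i) => [->|hb]; rewrite ?andbT ?andbF ?mulr1 ?mul1r ?mulr0 ?mul0r.
  apply: contraTneq isT => h0.
  have := congr1 (mulmx^~ (invmx P)) h0.
  rewrite /= mulmxK // mul0mx => /matrixP /(_ 0 i); rewrite !mxE !eqxx /=.
  by move/eqP; rewrite oner_eq0.
set y := P *m x.
have e1 : nrm2 (A *m x) = \sum_i d 0 i * `|y i 0| ^+ 2.
  rewrite -nrm2_adj adjmx_mul -mulmxA (mulmxA (adjmx A)) -/H hE iP.
  rewrite !mulmxA -adjmx_mul -mulmxA -/y mxE; apply: eq_bigr => i _.
  by rewrite mul_mx_diag !mxE normCK mulrAC mulrC (mulrC (_^*)).
have := nrm2_ge0 (A *m x); rewrite -(nrm2_unitary x aPP) -/y => h0.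
rewrite -(ger0_norm h0) e1; apply: le_trans (ler_norm_sum _ _ _) _.
rewrite /nrm2 mulr_sumr; apply: ler_sum => i _.
by rewrite normrM (ger0_norm (exprn_ge0 2 (normr_ge0 _))); apply: ler_wpM2r (dM i); rewrite exprn_ge0.
Qed.

End P2b.

Lemma idx_pairK m n (i : 'I_m) (r : 'I_n) : idx_pair (mxvec_index i r) = (i, r).
Proof. by rewrite /idx_pair /mxvec_index cast_ordK enum_rankK. Qed.

Lemma idx_pairV m n (k : 'I_(m * n)) :
  mxvec_index (idx_pair k).1 (idx_pair k).2 = k.
Proof. by rewrite /idx_pair /mxvec_index -surjective_pairing enum_valK cast_ordKV. Qed.

Section P3.
Variable C : numClosedFieldType.

Lemma sum_pair m n (f : 'I_(m * n) -> C) :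
  \sum_k f k = \sum_i \sum_r f (mxvec_index i r).
Proof.
rewrite pair_big /= (reindex (fun p : 'I_m * 'I_n => mxvec_index p.1 p.2)) //=.
exists (@idx_pair m n) => [p _|k _]; last exact: idx_pairV.
by rewrite idx_pairK -surjective_pairing.
Qed.

Definition sub m n (x : 'cV[C]_(m * n)) (i : 'I_m) : 'cV[C]_n :=
  \col_r x (mxvec_index i r) 0.

Lemma nrm2_sub m n (x : 'cV[C]_(m * n)) : nrm2 x = \sum_i nrm2 (sub x i).
Proof.
rewrite /nrm2 sum_pair; apply: eq_bigr => i _; apply: eq_bigr => r _.
by rewrite mxE.
Qed.

Lemma sub_ext m n (x y : 'cV[C]_(m * n)) : (forall i, sub x i = sub y i) -> x = y.
Proof.
move=> h; apply/matrixP => k j; rewrite ord1 -(idx_pairV k).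
by have /matrixP /(_ (idx_pair k).2 0) := h (idx_pair k).1; rewrite !mxE.
Qed.

Lemma sub_sum m n I (r : seq I) (f : I -> 'cV[C]_(m * n)) i :
  sub (\sum_(s <- r) f s) i = \sum_(s <- r) sub (f s) i.
Proof. by apply/matrixP => a b; rewrite !(mxE, summxE); apply: eq_bigr => s _; rewrite mxE. Qed.

Lemma sub_add m n (x y : 'cV[C]_(m * n)) i : sub (x + y) i = sub x i + sub y i.
Proof. by apply/matrixP => a b; rewrite !mxE. Qed.

Lemma sub_opp m n (x : 'cV[C]_(m * n)) i : sub (- x) i = - sub x i.
Proof. by apply/matrixP => a b; rewrite !mxE. Qed.

Lemma sub_0 m n i : sub (0 : 'cV[C]_(m * n)) i = 0.
Proof. by apply/matrixP => a b; rewrite !mxE. Qed.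

Lemma sub_1 m n (x : 'cV[C]_(m * n)) i : sub (1%:M *m x) i = sub x i.
Proof. by rewrite mul1mx. Qed.

Definition bop m n (K : 'I_m -> 'I_m -> 'M[C]_n) : 'M[C]_(m * n) :=
  \matrix_(a, b) (let (i, r) := idx_pair a in let (j, s) := idx_pair b in K i j r s).

Lemma bop_sub m n (K : 'I_m -> 'I_m -> 'M[C]_n) x i :
  sub (bop K *m x) i = \sum_j K i j *m sub x j.
Proof.
apply/matrixP => r c; rewrite ord1 !mxE summxE sum_pair; apply: eq_bigr => j _.
rewrite !mxE; apply: eq_bigr => s _; rewrite !mxE !idx_pairK.
done.
Qed.

Lemma blkdiag_bop m n (B : 'I_m -> 'M[C]_n) :
  blkdiag B = bop (fun i j => if i == j then B i else 0).
Proof.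
apply/matrixP => a b; rewrite !mxE.
case: (idx_pair a) => i r; case: (idx_pair b) => j s.
by case: eqP => _; rewrite ?mxE.
Qed.

Lemma blkdiag_sub m n (B : 'I_m -> 'M[C]_n) x i :
  sub (blkdiag B *m x) i = B i *m sub x i.
Proof.
rewrite blkdiag_bop bop_sub (bigD1 i) //= eqxx big1 ?addr0 // => j /negbTE hj.
by rewrite eq_sym hj mul0mx.
Qed.

Lemma blkbidiag_bop NT d (G : 'M[C]_d) :
  blkbidiag NT G = bop (fun i j => if i == j then 1%:M
     else if (i : nat) == (j : nat).+1 then - G else 0).
Proof.
apply/matrixP => a b; rewrite !mxE.
case: (idx_pair a) => i r; case: (idx_pair b) => j s.
by case: eqP => _; rewrite ?mxE //; case: eqP => _; rewrite ?mxE.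
Qed.

Lemma blkbidiag_sub0 NT d (G : 'M[C]_d) x :
  sub (blkbidiag NT G *m x) ord0 = sub x ord0.
Proof.
rewrite blkbidiag_bop bop_sub (bigD1 ord0) //= ?eqxx mul1mx big1 ?addr0 // => j hj.
by rewrite eq_sym (negbTE hj) mul0mx.
Qed.

Lemma blkbidiag_subS NT d (G : 'M[C]_d) x (t : nat) : (t < NT)%N ->
  sub (blkbidiag NT G *m x) (inord t.+1) = sub x (inord t.+1) - G *m sub x (inord t).
Proof.
move=> ht; have h1 : (t.+1 < NT.+1)%N by []. 
have h0 : (t < NT.+1)%N by apply: ltnW.
rewrite blkbidiag_bop bop_sub (bigD1 (inord t.+1)) //=.
rewrite (eqxx (inord t.+1 : 'I_NT.+1)) mul1mx.
rewrite (bigD1 (inord t)) /=; last first.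
  by apply/eqP => /(congr1 val); rewrite /= !inordK // => /n_Sn.
rewrite ifN; last first.
  by apply/eqP => /(congr1 val); rewrite /= !inordK // => /esym/n_Sn.
rewrite !inordK // ifT // mulNmx big1 ?addr0 // => j /andP [hj1 hj2].
rewrite ifN; last by rewrite eq_sym.
case: ifP => [/eqP h|_]; last by rewrite mul0mx.
by case/eqP: hj2; apply: val_inj; rewrite /= inordK //; case: h.
Qed.

End P3.

Section P4.
Variable C : numClosedFieldType.

Lemma wcs n (h u : 'I_n -> C) : (forall i, 0 <= h i) -> (forall i, 0 <= u i) ->
  (\sum_i h i * u i) ^+ 2 <= (\sum_i h i) * (\sum_i h i * u i ^+ 2).
Proof.
move=> h0 u0.
have E0 : \sum_i \sum_j h i * h j * (u i - u j) ^+ 2 =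
   (\sum_i h i * u i ^+ 2) * (\sum_j h j) + (\sum_i h i) * (\sum_j h j * u j ^+ 2)
   - 2 * ((\sum_i h i * u i) * (\sum_j h j * u j)).
  rewrite !big_distrlr /= mulr_sumr -big_split -sumrB /=; apply: eq_bigr => i _.
  rewrite mulr_sumr -big_split -sumrB /=; apply: eq_bigr => j _.
  ring.
have E : \sum_i \sum_j h i * h j * (u i - u j) ^+ 2 =
   2 * ((\sum_i h i) * (\sum_i h i * u i ^+ 2) - (\sum_i h i * u i) ^+ 2).
  rewrite E0; ring.
have : 0 <= \sum_i \sum_j h i * h j * (u i - u j) ^+ 2.
  apply: sumr_ge0 => i _; apply: sumr_ge0 => j _.
  apply: mulr_ge0; first exact: mulr_ge0.
  by rewrite -realEsqr rpredB // ger0_real.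
by rewrite E pmulr_rge0 // subr_ge0.
Qed.

Lemma prefix_le (g : nat -> C) n K : (n <= K)%N ->
  \sum_(0 <= i < n) `|g i| <= \sum_(0 <= i < K) `|g i|.
Proof.
move=> hn; rewrite (@big_cat_nat _ _ _ n 0 K) //= lerDl.
by apply: sumr_ge0 => i _.
Qed.

Lemma young (K : nat) (g w : nat -> C) :
  \sum_(t < K.+1) `|\sum_(s < t) g (t - s.+1)%N * w s| ^+ 2 <=
  (\sum_(k < K) `|g k|) ^+ 2 * \sum_(s < K.+1) `|w s| ^+ 2.
Proof.
set S := \sum_(k < K) `|g k|.
have S0 : 0 <= S by apply: sumr_ge0 => i _.
pose h (t s : 'I_K.+1) := if (s < t)%N then `|g (t - s.+1)%N| else 0.
have h0 : forall t s, 0 <= h t s by move=> t s; rewrite /h; case: ifP.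
have rowS : forall t : 'I_K.+1, \sum_s h t s <= S.
  move=> t; rewrite /h -big_mkcond /=.
  rewrite -(big_ord_widen K.+1 (fun s => `|g (t - s.+1)%N|) (ltnW (ltn_ord t))).
  rewrite -(big_mkord xpredT (fun s => `|g (t - s.+1)%N|)) big_nat_rev /= add0n.
  rewrite /S -(big_mkord xpredT (fun k => `|g k|)).
  rewrite (@eq_big_nat _ _ _ 0 t _ (fun i => `|g i|)); last first.
    move=> i /andP [_ hi]; congr `|g _|.
    by move: hi; move: (nat_of_ord t) => T hi; lia.
  by apply: prefix_le; rewrite -ltnS.
have colS : forall s : 'I_K.+1, \sum_t h t s <= S.
  move=> s; rewrite /h /S -(big_mkord xpredT (fun t => if (s < t)%N then `|g (t - s.+1)%N| else 0)).
  rewrite (@big_cat_nat _ _ _ s.+1 0 K.+1) //= big1_seq ?add0r; last first.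
    by move=> i /andP [_]; rewrite mem_index_iota => /andP [_ hi]; rewrite ltnNge -ltnS hi.
  rewrite (@eq_big_nat _ _ _ s.+1 K.+1 _ (fun t => `|g (t - s.+1)%N|)); last first.
    by move=> i /andP [hi _]; rewrite hi.
  rewrite -{1}(add0n s.+1) big_addn subSS -(big_mkord xpredT (fun k => `|g k|)).
  rewrite (@eq_big_nat _ _ _ 0 (K - s) _ (fun i => `|g i|)); last first.
    by move=> i _; rewrite addnK.
  by apply: prefix_le; rewrite leq_subr.
have step1 : forall t : 'I_K.+1,
    `|\sum_(s < t) g (t - s.+1)%N * w s| <= \sum_s h t s * `|w s|.
  move=> t; rewrite (big_ord_widen K.+1 (fun s => g (t - s.+1)%N * w s) (ltnW (ltn_ord t))).
  rewrite big_mkcond /=; apply: le_trans (ler_norm_sum _ _ _) _.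
  apply: ler_sum => s _; rewrite /h; case: ifP => _.
    by rewrite normrM.
  by rewrite normr0 mul0r.
apply: (@le_trans _ _ (\sum_(t < K.+1) (\sum_s h t s * `|w s|) ^+ 2)).
  apply: ler_sum => t _; apply: lerXn2r; rewrite ?qualifE /= ?step1 //.
  by apply: sumr_ge0 => s _; rewrite mulr_ge0.
apply: (@le_trans _ _ (\sum_(t < K.+1) S * \sum_s h t s * `|w s| ^+ 2)).
  apply: ler_sum => t _; apply: le_trans (wcs _ _) _ => //.
  apply: ler_wpM2r; first by apply: sumr_ge0 => s _; rewrite mulr_ge0 ?exprn_ge0.
  exact: rowS.
rewrite -mulr_sumr exchange_big /= expr2 -mulrA; apply: ler_wpM2l => //.
rewrite mulr_sumr; apply: ler_sum => s _; rewrite -mulr_suml mulrC.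
by rewrite [S * _]mulrC; apply: ler_wpM2l; rewrite ?exprn_ge0 ?colS.
Qed.

End P4.

Section P5.
Variable C : numClosedFieldType.

Lemma opnorm2_ge0 n (A : 'M[C]_n) : 0 <= opnorm2 A.
Proof. by rewrite /opnorm2 sqrtC_ge0; apply: bigmaxC_ge0. Qed.

Lemma unitary_inv n (F : 'M[C]_n) : adjmx F *m F = 1%:M ->
  F \in unitmx /\ invmx F = adjmx F.
Proof.
move=> hF; have [_ Fu] := mulmx1_unit hF; split => //.
by rewrite -[LHS]mul1mx -hF mulmxK.
Qed.

Lemma toeplitz_bound (Nx q K : nat) (F : 'M[C]_(Nx * q)) (U : 'I_Nx -> 'M[C]_q)
  (gam : 'I_Nx -> 'I_q -> nat -> C) (c : nat -> 'M[C]_(Nx * q))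
  (X : nat -> 'cV[C]_(Nx * q)) :
  adjmx F *m F = 1%:M -> (forall n, U n \in unitmx) ->
  (forall k, c k = F *m blkdiag (fun n => U n *m diag_mx (\row_l gam n l k)
                                    *m invmx (U n)) *m invmx F) ->
  \sum_(t < K.+1) nrm2 (\sum_(s < t) c (t - s.+1)%N *m X s) <=
  (\big[Num.max/0]_(n < Nx) (cond2 (U n) *
       \big[Num.max/0]_(l < q) \sum_(k < K) `|gam n l k|)) ^+ 2
   * \sum_(t < K.+1) nrm2 (X t).
Proof.
move=> hF hU hc.
have [Fu iF] := unitary_inv hF.
have hF' : adjmx (adjmx F) *m adjmx F = 1%:M by rewrite adjmxK -iF mulmxV.
pose Y s := invmx F *m X s.
pose W s n := invmx (U n) *m sub (Y s) n.
pose Dg n k := diag_mx (\row_l gam n l k).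
pose beta n := \big[Num.max/0]_(l < q) \sum_(k < K) `|gam n l k|.
set B := \big[Num.max/0]_(n < Nx) _.
have beta0 : forall n, 0 <= beta n.
  by move=> n; apply: bigmaxC_ge0 => l; apply: sumr_ge0.
have B0 : 0 <= B.
  by apply: bigmaxC_ge0 => n; rewrite mulr_ge0 ?beta0 // mulr_ge0 ?opnorm2_ge0.
have stepA : forall t : 'I_K.+1,
  nrm2 (\sum_(s < t) c (t - s.+1)%N *m X s) <=
  \sum_n opnorm2 (U n) ^+ 2 *
     \sum_l `|\sum_(s < t) gam n l (t - s.+1)%N * W s n l 0| ^+ 2.
  move=> t.
  have e1 : \sum_(s < t) c (t - s.+1)%N *m X s = F *m \sum_(s < t)
      blkdiag (fun n => U n *m Dg n (t - s.+1)%N *m invmx (U n)) *m Y s.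
    by rewrite mulmx_sumr; apply: eq_bigr => s _; rewrite hc !mulmxA.
  rewrite e1 nrm2_unitary // nrm2_sub; apply: ler_sum => n _; rewrite sub_sum.
  have e2 : \sum_(s < t) sub (blkdiag (fun n => U n *m Dg n (t - s.+1)%N
        *m invmx (U n)) *m Y s) n = U n *m \sum_(s < t) Dg n (t - s.+1)%N *m W s n.
    by rewrite mulmx_sumr; apply: eq_bigr => s _; rewrite blkdiag_sub !mulmxA.
  rewrite e2; apply: le_trans (opnorm2_ge _ _) _.
  rewrite /nrm2 le_eqVlt; apply/orP; left; apply/eqP; congr (_ * _).
  apply: eq_bigr => l _; rewrite summxE; congr (`|_| ^+ 2).
  by apply: eq_bigr => s _; rewrite mul_diag_mx !mxE.
apply: le_trans (ler_sum _ (fun t _ => stepA t)) _.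
rewrite exchange_big /=.
apply: (@le_trans _ _ (\sum_n B ^+ 2 * \sum_(s < K.+1) nrm2 (sub (Y s) n))); last first.
  rewrite -mulr_sumr exchange_big /= le_eqVlt; apply/orP; left; apply/eqP.
  congr (_ * _); apply: eq_bigr => s _; rewrite -nrm2_sub /Y iF nrm2_unitary //.
apply: ler_sum => n _; rewrite -mulr_sumr exchange_big /=.
apply: (@le_trans _ _ (opnorm2 (U n) ^+ 2 * (beta n ^+ 2 *
    \sum_(s < K.+1) nrm2 (W s n)))).
  apply: ler_wpM2l; first by rewrite exprn_ge0 ?opnorm2_ge0.
  rewrite /nrm2 [in X in _ <= X]exchange_big /= mulr_sumr.
  apply: ler_sum => l _.
  apply: le_trans (young K (fun k => gam n l k) (fun s => W s n l 0)) _.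
  apply: ler_wpM2r; first by apply: sumr_ge0 => s _; rewrite exprn_ge0.
  apply: lerXn2r; rewrite ?qualifE /= ?beta0 //; first by apply: sumr_ge0.
  by rewrite /beta; apply: le_bigmaxC_ord => i; apply: sumr_ge0.
apply: (@le_trans _ _ (opnorm2 (U n) ^+ 2 * (beta n ^+ 2 *
    \sum_(s < K.+1) opnorm2 (invmx (U n)) ^+ 2 * nrm2 (sub (Y s) n)))).
  apply: ler_wpM2l; first by rewrite exprn_ge0 ?opnorm2_ge0.
  apply: ler_wpM2l; first by rewrite exprn_ge0 ?beta0.
  by apply: ler_sum => s _; apply: opnorm2_ge.
rewrite -mulr_sumr mulrA mulrA; apply: ler_wpM2r.
  by apply: sumr_ge0 => s _; apply: nrm2_ge0.
rewrite -!exprMn; apply: lerXn2r; rewrite ?qualifE /= ?B0 //.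
  by rewrite !mulr_ge0 ?opnorm2_ge0.
rewrite -mulrA (mulrC (beta n)) mulrA.
rewrite /B; apply: le_bigmaxC_ord => i.
by rewrite mulr_ge0 ?beta0 // mulr_ge0 ?opnorm2_ge0.
Qed.

End P5.

Section P6.
Variable C : numClosedFieldType.

Lemma mx_ext m n (A B : 'M[C]_(m, n)) : (forall x : 'cV_n, A *m x = B *m x) -> A = B.
Proof.
move=> h; apply/matrixP => i j.
have /matrixP /(_ i 0) := h (delta_mx j 0).
by rewrite -!colE !mxE.
Qed.

Lemma eq_blkdiag m n (f g : 'I_m -> 'M[C]_n) :
  (forall i, f i = g i) -> blkdiag f = blkdiag g.
Proof.
move=> h; apply/matrixP => a b; rewrite !mxE.
by case: (idx_pair a) => i r; case: (idx_pair b) => j s; rewrite h.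
Qed.

Lemma blkdiagM m n (f g : 'I_m -> 'M[C]_n) :
  blkdiag f *m blkdiag g = blkdiag (fun i => f i *m g i).
Proof.
apply: mx_ext => x; apply: sub_ext => i.
by rewrite -mulmxA !blkdiag_sub mulmxA.
Qed.

Lemma blkdiagB m n (f g : 'I_m -> 'M[C]_n) :
  blkdiag f - blkdiag g = blkdiag (fun i => f i - g i).
Proof.
apply: mx_ext => x; apply: sub_ext => i.
by rewrite mulmxBl sub_add sub_opp !blkdiag_sub mulmxBl.
Qed.

Lemma blkdiag1 m n : blkdiag (fun _ : 'I_m => (1%:M : 'M[C]_n)) = 1%:M.
Proof.
apply: mx_ext => x; apply: sub_ext => i.
by rewrite blkdiag_sub !mul1mx.
Qed.

Lemma blkdiag0 m n : blkdiag (fun _ : 'I_m => (0 : 'M[C]_n)) = 0.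
Proof.
apply: mx_ext => x; apply: sub_ext => i.
by rewrite blkdiag_sub !mul0mx sub_0.
Qed.

Lemma diag_mxM n (a b : 'rV[C]_n) :
  diag_mx a *m diag_mx b = diag_mx (\row_j (a 0 j * b 0 j)).
Proof.
apply/matrixP => i j; rewrite mul_diag_mx !mxE.
by case: eqP => [->|_]; rewrite ?mulr1n ?mulr0n ?mulr0.
Qed.

Variables (Nx q : nat) (F : 'M[C]_(Nx * q)) (U : 'I_Nx -> 'M[C]_q).
Hypothesis hF : F \in unitmx.
Hypothesis hU : forall n, U n \in unitmx.

Definition Tm (g : 'I_Nx -> 'rV[C]_q) :=
  F *m blkdiag (fun n => U n *m diag_mx (g n) *m invmx (U n)) *m invmx F.

Lemma eq_Tm g h : (forall n, g n = h n) -> Tm g = Tm h.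
Proof. by move=> e; rewrite /Tm (eq_blkdiag (g := fun n => U n *m diag_mx (h n) *m invmx (U n))) // => n; rewrite e. Qed.

Lemma TmM g h : Tm g *m Tm h = Tm (fun n => \row_l (g n 0 l * h n 0 l)).
Proof.
rewrite /Tm !mulmxA mulmxKV // -(mulmxA F) blkdiagM; congr (_ *m _ *m _).
apply: eq_blkdiag => n.
by rewrite !mulmxA mulmxKV // -(mulmxA (U n)) diag_mxM.
Qed.

Lemma TmB g h : Tm g - Tm h = Tm (fun n => g n - h n).
Proof.
rewrite /Tm -mulmxBl -mulmxBr blkdiagB; congr (_ *m _ *m _).
apply: eq_blkdiag => n.
rewrite -mulmxBl -mulmxBr; congr (_ *m _ *m _).
by apply/matrixP => i j; rewrite !mxE mulrnBl.
Qed.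

Lemma Tm1 : Tm (fun _ => const_mx 1) = 1%:M.
Proof.
rewrite /Tm (@eq_blkdiag _ _ _ (fun _ => 1%:M)).
  by rewrite blkdiag1 mulmx1 mulmxV.
by move=> n; rewrite diag_const_mx mulmx1 mulmxV.
Qed.

Lemma Tm0 : Tm (fun _ => 0) = 0.
Proof.
rewrite /Tm (@eq_blkdiag _ _ _ (fun _ => 0)).
  by rewrite blkdiag0 mulmx0 mul0mx.
by move=> n; rewrite linear0 mulmx0 mul0mx.
Qed.

Lemma TmX g k : Tm g ^+ k = Tm (fun n => \row_l (g n 0 l ^+ k)).
Proof.
elim: k => [|k IH].
  rewrite expr0; transitivity (Tm (fun _ => const_mx 1)); first by rewrite Tm1.
  apply: eq_Tm => n; apply/matrixP => i j.
  by rewrite !mxE.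
rewrite exprS -mulmxE IH TmM; apply: eq_Tm => n; apply/matrixP => i j.
by rewrite !mxE exprS.
Qed.

End P6.

Section P7.
Lemma zmod_id (V : zmodType) (a pb pcvb pcb : V) :
  a - (a - pb + pcvb) = (pcb - pcvb) + (pb - pcb).
Proof.
by rewrite opprD opprB addrA (addrC a) subrK [RHS]addrC addrA subrK.
Qed.

Variable C : numClosedFieldType.

Lemma inord0' NT : (inord 0 : 'I_NT.+1) = ord0.
Proof. by apply: val_inj; rewrite /= inordK. Qed.

Lemma blkbidiag_unit NT d (G : 'M[C]_d) : blkbidiag NT G \in unitmx.
Proof.
rewrite unitmxE unitfE -det_tr; apply/negP => /det0P [v vn0 hv].
pose w := v^T.
have hw : blkbidiag NT G *m w = 0.
  by have := congr1 trmx hv; rewrite trmx_mul trmxK trmx0.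
have hz : forall t, (t <= NT)%N -> sub w (inord t) = 0.
  elim => [_|t IH ht].
    by rewrite inord0'; have := blkbidiag_sub0 G w; rewrite hw sub_0 => <-.
  have := blkbidiag_subS G w ht; rewrite hw sub_0 (IH (ltnW ht)) mulmx0 subr0.
  by move=> <-.
have w0 : w = 0.
  by apply: sub_ext => i; rewrite sub_0 -(inord_val i) hz // -ltnS.
move: vn0; rewrite -(trmxK v) -/w w0 trmx0.
by rewrite eqxx.
Qed.

Lemma EF_sub NT d (Pc P : 'M[C]_d) (x : 'cV_(NT.+1 * d)) (i : 'I_NT.+1) :
  sub ((1%:M - invmx (blkbidiag NT Pc) *m blkbidiag NT P) *m x) i =
  \sum_(s < i) Pc ^+ (i - s.+1) *m (P - Pc) *m sub x (inord s).
Proof.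
set Ac := blkbidiag NT Pc; set AS := blkbidiag NT P.
have Au : Ac \in unitmx by apply: blkbidiag_unit.
set v := invmx Ac *m (AS *m x).
have hv : Ac *m v = AS *m x by rewrite /v mulKVmx.
have -> : (1%:M - invmx Ac *m AS) *m x = x - v by rewrite mulmxBl mul1mx -mulmxA.
suff claim : forall t, (t <= NT)%N -> sub (x - v) (inord t) =
    \sum_(s < t) Pc ^+ (t - s.+1) *m (P - Pc) *m sub x (inord s).
  by rewrite -{1}(inord_val i) claim // -ltnS.
elim => [_|t IH ht].
  rewrite big_ord0 inord0' sub_add sub_opp.
  have := blkbidiag_sub0 Pc v; rewrite hv blkbidiag_sub0 => ->.
  by rewrite subrr.
have h1 := blkbidiag_subS Pc v ht; rewrite hv blkbidiag_subS // in h1.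
rewrite big_ord_recr /= subnn expr0 mul1mx.
have e : \sum_(s < t) Pc ^+ (t.+1 - (s : 'I_t).+1) *m (P - Pc) *m sub x (inord s) =
   Pc *m \sum_(s < t) Pc ^+ (t - (s : 'I_t).+1) *m (P - Pc) *m sub x (inord s).
  rewrite mulmx_sumr; apply: eq_bigr => s _.
  by rewrite subSS -(subnSK (ltn_ord s)) exprS -mulmxE !mulmxA.
rewrite e -(IH (ltnW ht)) !sub_add !sub_opp.
move: h1; set a := sub x (inord t.+1); set b := sub x (inord t).
set va := sub v (inord t.+1); set vb := sub v (inord t) => h1.
have -> : va = a - P *m b + Pc *m vb by rewrite h1 subrK.
by rewrite mulmxBr mulmxBl; apply: zmod_id.
Qed.

Lemma EFCF_sub NT d (Pc P : 'M[C]_d) (x : 'cV_(NT.+1 * d)) (i : 'I_NT.+1) :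
  sub ((1%:M - invmx (blkbidiag NT Pc) *m blkbidiag NT P) *m (1%:M - blkbidiag NT P) *m x) i =
  \sum_(s < i) (if (i - s.+1)%N is k.+1 then Pc ^+ k *m (P - Pc) *m P else 0)
      *m sub x (inord s).
Proof.
rewrite -mulmxA EF_sub.
set x' := (1%:M - blkbidiag NT P) *m x.
have X0 : sub x' (inord 0) = 0.
  rewrite inord0' /x' mulmxBl mul1mx sub_add sub_opp blkbidiag_sub0.
  by rewrite subrr.
have XS : forall s, (s < NT)%N -> sub x' (inord s.+1) = P *m sub x (inord s).
  move=> s hs; rewrite /x' mulmxBl mul1mx sub_add sub_opp blkbidiag_subS //.
  by rewrite opprB addrC subrK.
case: i => [[|u] hi] /=; first by rewrite !big_ord0.
rewrite big_ord_recl big_ord_recr /= X0 mulmx0 add0r subnn mul0mx addr0.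
have hu : (u < NT)%N by [].
apply: eq_bigr => s _; rewrite /bump /= add1n (XS s (ltn_trans (ltn_ord s) hu)).
by rewrite !subSS -(subnSK (ltn_ord s)) !mulmxA.
Qed.

End P7.

Lemma geomC (C : numClosedFieldType) (a : C) n : a != 1 ->
  \sum_(k < n) a ^+ k = (1 - a ^+ n) / (1 - a).
Proof.
move=> a1; have h : 1 - a ^+ n = (1 - a) * \sum_(k < n) a ^+ k.
  by rewrite -opprB subrX1 -mulNr opprB.
by rewrite h mulrC mulKf // subr_eq0 eq_sym.
Qed.


Unset Implicit Arguments.

Theorem mainTheorem1 (C : numClosedFieldType) (q Nx NT m : nat)
  (hq : (1 <= q)%N) (hNx : (1 <= Nx)%N) (hNT : (1 <= NT)%N) (hm : (1 <= m)%N)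
  (Phi Phic F : 'M[C]_(Nx * q))
  (Phit Phict : 'I_Nx -> 'M[C]_q)
  (U : 'I_Nx -> 'M[C]_q)
  (lam mu : 'I_Nx -> 'I_q -> C)
  (hFunit : adjmx F *m F = 1%:M)
  (hPhi : invmx F *m Phi *m F = blkdiag Phit)
  (hPhic : invmx F *m Phic *m F = blkdiag Phict)
  (hU : forall n, U n \in unitmx)
  (hlam : forall n, invmx (U n) *m Phit n *m U n = diag_mx (\row_l lam n l))
  (hmu : forall n, invmx (U n) *m Phict n *m U n = diag_mx (\row_l mu n l))
  (hmu1 : forall n l, `|mu n l| != 1) :
  let Ac := blkbidiag NT Phic in
  let AS := blkbidiag NT (Phi ^+ m) in
  let EF := 1%:M - invmx Ac *m AS in
  let EFCF := (1%:M - invmx Ac *m AS) *m (1%:M - AS) in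
  opnorm2 EF <=
    \big[Num.max/0]_(n < Nx)
      (cond2 (U n) *
       \big[Num.max/0]_(l < q)
         (`|lam n l ^+ m - mu n l| * ((1 - `|mu n l| ^+ NT) / (1 - `|mu n l|))))
  /\
  opnorm2 EFCF <=
    \big[Num.max/0]_(n < Nx)
      (cond2 (U n) *
       \big[Num.max/0]_(l < q)
         (`|lam n l ^+ m - mu n l| * `|lam n l| ^+ m
            * ((1 - `|mu n l| ^+ NT.-1) / (1 - `|mu n l|)))).
Proof.
move=> Ac AS EF EFCF.
have [Fu iF] := unitary_inv hFunit.
have eT : forall (A : 'M[C]_(Nx * q)) (B : 'I_Nx -> 'M[C]_q) g,
    invmx F *m A *m F = blkdiag B ->
    (forall n, invmx (U n) *m B n *m U n = diag_mx (g n)) ->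
    A = Tm F U g.
  move=> A B g hA hB.
  have eB : forall n, B n = U n *m diag_mx (g n) *m invmx (U n).
    by move=> n; rewrite -hB !mulmxA mulmxV // mul1mx mulmxK.
  by rewrite /Tm -(eq_blkdiag eB) -hA !mulmxA mulmxV // mul1mx mulmxK.
have ePhi := eT _ _ _ hPhi hlam.
have ePhic := eT _ _ _ hPhic hmu.
pose D := Phi ^+ m - Phic.
have eD : D = Tm F U (fun n => \row_l (lam n l ^+ m - mu n l)).
  rewrite /D ePhi ePhic (@TmX _ _ _ F U Fu hU) (@TmB _ _ _ F U); apply: eq_Tm => n.
  by apply/matrixP => i j; rewrite !mxE.
have eP : Phi ^+ m = Tm F U (fun n => \row_l (lam n l ^+ m)).
  rewrite ePhi (@TmX _ _ _ F U Fu hU); apply: eq_Tm => n.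
  by apply/matrixP => i j; rewrite !mxE.
have nrmx : forall x : 'cV[C]_(NT.+1 * (Nx * q)),
    nrm2 x = \sum_(t < NT.+1) nrm2 (sub x (inord t)).
  by move=> x; rewrite nrm2_sub; apply: eq_bigr => i _; rewrite inord_val.
have cond0 : forall n, 0 <= cond2 (U n).
  by move=> n; rewrite mulr_ge0 ?opnorm2_ge0.
split.
- pose gam n l k := mu n l ^+ k * (lam n l ^+ m - mu n l).
  pose B := \big[Num.max/0]_(n < Nx) (cond2 (U n) *
       \big[Num.max/0]_(l < q) \sum_(k < NT) `|gam n l k|).
  have -> : \big[Num.max/0]_(n < Nx)
      (cond2 (U n) *
       \big[Num.max/0]_(l < q)
         (`|lam n l ^+ m - mu n l| * ((1 - `|mu n l| ^+ NT) / (1 - `|mu n l|))))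
       = B.
    apply: eq_bigr => n _; congr (_ * _); apply: eq_bigr => l _.
    rewrite -geomC ?hmu1 // mulr_sumr; apply: eq_bigr => k _.
    by rewrite /gam normrM normrX mulrC.
  apply: opnorm2_le.
    apply: bigmaxC_ge0 => n; rewrite mulr_ge0 ?cond0 //.
    by apply: bigmaxC_ge0 => l; apply: sumr_ge0.
  move=> x; rewrite nrm2_sub nrmx.
  have hc : forall k, Phic ^+ k *m D = Tm F U (fun n => \row_l gam n l k).
    move=> k; rewrite eD ePhic (@TmX _ _ _ F U Fu hU) (@TmM _ _ _ F U Fu hU); apply: eq_Tm => n.
    by apply/matrixP => i j; rewrite !mxE.
  apply: (le_trans _ (@toeplitz_bound C Nx q NT F U gam
      (fun k => Phic ^+ k *m D) (fun s => sub x (inord s)) hFunit hU hc)).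
  by rewrite le_eqVlt; apply/orP; left; apply/eqP; apply: eq_bigr => i _; rewrite /EF EF_sub.
- pose gam n l k := if k is k'.+1 then mu n l ^+ k' * (lam n l ^+ m - mu n l) * lam n l ^+ m else 0.
  pose B := \big[Num.max/0]_(n < Nx) (cond2 (U n) *
       \big[Num.max/0]_(l < q) \sum_(k < NT) `|gam n l k|).
  have -> : \big[Num.max/0]_(n < Nx)
      (cond2 (U n) *
       \big[Num.max/0]_(l < q)
         (`|lam n l ^+ m - mu n l| * `|lam n l| ^+ m
            * ((1 - `|mu n l| ^+ NT.-1) / (1 - `|mu n l|))))
       = B.
    apply: eq_bigr => n _; congr (_ * _); apply: eq_bigr => l _.
    case: (NT) hNT => // NT' _.
    rewrite big_ord_recl /= normr0 add0r.
    rewrite -geomC ?hmu1 // mulr_sumr; apply: eq_bigr => k _.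
    by rewrite /gam !normrM !normrX mulrC mulrA.
  apply: opnorm2_le.
    apply: bigmaxC_ge0 => n; rewrite mulr_ge0 ?cond0 //.
    by apply: bigmaxC_ge0 => l; apply: sumr_ge0.
  move=> x; rewrite nrm2_sub nrmx.
  have hc : forall k, (if k is k'.+1 then Phic ^+ k' *m D *m Phi ^+ m else 0) =
      Tm F U (fun n => \row_l gam n l k).
    case=> [|k].
      rewrite -(Tm0 F U); apply: eq_Tm => n.
      by apply/matrixP => i j; rewrite !mxE.
    rewrite eD ePhic eP (@TmX _ _ _ F U Fu hU) !(@TmM _ _ _ F U Fu hU); apply: eq_Tm => n.
    by apply/matrixP => i j; rewrite !mxE.
  apply: (le_trans _ (@toeplitz_bound C Nx q NT F U gam
      (fun k => if k is k'.+1 then Phic ^+ k' *m D *m Phi ^+ m else 0)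
      (fun s => sub x (inord s)) hFunit hU hc)).
  by rewrite le_eqVlt; apply/orP; left; apply/eqP; apply: eq_bigr => i _; rewrite /EFCF EFCF_sub.
Qed.
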